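(* Let $(x^k)$ be generated by the augmented Lagrangian method described below, where each step satisfies the inexactness assumption described below with $\varepsilon_k\downarrow0$, and let $\bar x$ be a limit point of $(x^k)$ along some subsequence $K\subset\mathbb{N}$ (i.e. $x^k\to_K\bar x$). If $\bar x$ is feasible for the GNEP (i.e. $g^\nu(\bar x)\le0$ and $h^\nu(\bar x)\le0$ for all $\nu$), then for every $\nu$ $$\nabla_{x^\nu}\theta_\nu(x^k)+\nabla_{x^\nu}g^\nu(x^k)\lambda^{\nu,k}+\nabla_{x^\nu}h^\nu(x^k)\mu^{\nu,k}\to_K0,$$ $$\min\{-g^\nu(x^k),\lambda^{\nu,k}\}\to_K0,\qquad\min\{-h^\nu(x^k),\mu^{\nu,k}\}\to_K0.$$
   Context: GNEP: $N$ players, variables $x=(x^1,\ldots,x^N)\in\mathbb{R}^n$, $x^\nu\in\mathbb{R}^{n_\nu}$. Player $\nu$ solves $\min_{x^\nu}\theta_\nu(x)$ s.t. $g^\nu(x)\le0$, $h^\nu(x)\le0$, with continuously differentiable $\theta_\nu:\mathbb{R}^n\to\mathbb{R}$, $g^\nu:\mathbb{R}^n\to\mathbb{R}^{m_\nu}$, $h^\nu:\mathbb{R}^n\to\mathbb{R}^{p_\nu}$ ($p_\nu=0$ allowed); $m=\sum m_\nu$, $p=\sum p_\nu$. Notation: $v_+=\max\{0,v\}$ componentwise; $\nabla f$ = transposed Jacobian, $\nabla_{x^\nu}f$ its rows for $x^\nu$; $\min$ componentwise; Euclidean norms; $\to_K$ = convergence along $k\in K$. Vectors in $\mathbb{R}^m$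 (resp. $\mathbb{R}^p$) are split into player blocks $\lambda^{\nu}\in\mathbb{R}^{m_\nu}$ (resp. $\mu^\nu\in\mathbb{R}^{p_\nu}$). Augmented Lagrangian of player $\nu$: $L_a^\nu(x,u;\rho)=\theta_\nu(x)+\frac{\rho}{2}\|(g^\nu(x)+u/\rho)_+\|^2$. Method: choose $x^0\in\mathbb{R}^n,\lambda^0\in\mathbb{R}^m,\mu^0\in\mathbb{R}^p$, an initial $u^0\in\mathbb{R}^m$, $u^{\max}\ge0$, and for each $\nu$: $\tau_\nu\in(0,1)$, $\gamma_\nu>1$, $\rho_{\nu,0}>0$. For $k=0,1,2,\dots$ (the method is assumed to run forever): (1) compute $(x^{k+1},\mu^{k+1})\in\mathbb{R}^{n+p}$ satisfying the inexactness assumption; (2) $\lambda^{\nu,k+1}=(u^{\nu,k}+\rho_{\nu,k}g^\nu(x^{k+1}))_+$; (3) for each $\nu$: if $\|\min\{-g^\nu(x^{k+1}),\lambda^{\nu,k+1}\}\|\le\tau_\nu\|\min\{-g^\nu(x^k),\lambda^{\nu,k}\}\|$ then $\rho_{\nu,k+1}=\rho_{\nu,k}$, else $\rho_{\nu,k+1}=\gamma_\nu\rho_{\nu,k}$; (4) $u^{k+1}=\min\{\lambda^{k+1},u^{\max}\}$ componentwise. Inexactness assumption: for all $k,\nu$, $\|\nabla_{x^\nu}L_a^\nu(x^{k+1},u^{\nu,k};\rho_{\nu,k})+\nabla_{x^\nu}h^\nu(x^{k+1})\mu^{\nu,k+1}\|\le\varepsilon_k$ and $\|\min\{-h^\nu(x^{k+1}),\mu^{\nu,k+1}\}\|\le\varepsilon_k'$,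 with $(\varepsilon_k)\subset[0,\infty)$ bounded and $\varepsilon'_k\to0$. *)

(* Defs.v *)
From HB Require Import structures.
From mathcomp Require Import all_boot all_order all_algebra.
From mathcomp Require Import all_classical all_reals all_analysis.
Set Implicit Arguments. Unset Strict Implicit. Unset Printing Implicit Defensive.
Import Order.TTheory GRing.Theory Num.Theory.
Import numFieldNormedType.Exports.
Local Open Scope ring_scope.

(* Player blocks are encoded by maps assigning each coordinate to a player:
   bx : 'I_n -> 'I_N (coordinates of x), bg : 'I_m -> 'I_N (components of g),
   bh : 'I_p -> 'I_N (components of h). *)

Definition unitv (R : realType) (n : nat) (i : 'I_n) : 'rV[R]_n := delta_mx 0 i.

Definition pd (R : realType) (n : nat) (f : 'rV[R]_n -> R) (x : 'rV[R]_n) (i : 'I_n) : R :=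
  'D_(unitv R i) f x.

Definition C1 (R : realType) (n : nat) (f : 'rV[R]_n -> R) : Prop :=
  (forall x, differentiable f x) /\ (forall i : 'I_n, continuous (fun x => pd f x i)).

Definition bnorm (R : realType) (k : nat) (P : pred 'I_k) (v : 'I_k -> R) : R :=
  Num.sqrt (\sum_(j < k | P j) v j ^+ 2).

Definition La (R : realType) (N n m : nat) (bg : 'I_m -> 'I_N)
  (theta : 'I_N -> 'rV[R]_n -> R) (g : 'I_m -> 'rV[R]_n -> R)
  (nu : 'I_N) (u : 'I_m -> R) (rho : R) (x : 'rV[R]_n) : R :=
  theta nu x + rho / 2 * \sum_(j < m | bg j == nu) (Num.max 0 (g j x + u j / rho)) ^+ 2.

(* Main.v *)
Require Import Defs.
From HB Require Import structures.
From mathcomp Require Import all_boot all_order all_algebra.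
From mathcomp Require Import all_classical all_reals all_analysis.
From mathcomp Require Import ring lra zify.
Import Order.TTheory GRing.Theory Num.Theory.
Import numFieldNormedType.Exports.
Local Open Scope classical_set_scope.
Local Open Scope ring_scope.

Section S.
Variable R : realType.

Definition Fq (t : R) : R := Num.max 0 t ^+ 2.

Lemma Fq_is_derive (s : R) : is_derive s 1 Fq (2 * Num.max 0 s).
Proof.
have [s0|s0|->] := ltgtP s 0.
- have e : (\near s, (fun t : R => 0 : R) s = Fq s).
    near=> t. rewrite /Fq max_l ?expr0n //. apply: ltW.
    near: t. by apply: (cvgr_lt s) => //; exact: cvg_id.
  apply: near_eq_is_derive e _.
  rewrite mulr0.
  exact: is_derive_cst.
- have e : (\near s, (fun t : R => t ^+ 2) s = Fq s).
    near=> t. rewrite /Fq max_r //. apply: ltW.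
    near: t. by apply: (cvgr_gt s) => //; exact: cvg_id.
  apply: near_eq_is_derive e _.

  apply: DeriveDef; first exact: exprn_derivable.
  by rewrite exp_derive expr1 [_%:A]mulr1.
- have L : (fun h : R => h^-1 *: ((Fq \o shift 0) (h *: 1) - Fq 0)) @ 0^' --> (0:R).
    have E : {near 0^', (fun h : R => Num.max 0 h) =1 (fun h : R => h^-1 *: ((Fq \o shift 0) (h *: 1) - Fq 0))}.
      near=> h.
      have hn0 : h != 0 by near: h; exact: nbhs_dnbhs_neq.
      rewrite /= /Fq addr0 maxxx expr0n subr0 /= [_%:A]mulr1.
      have [h0|h0|h0] := ltgtP 0 h.
      + by rewrite expr2 -[_ *: _]/(h^-1 * (h*h)) mulKf.
      + by rewrite expr0n /= -[_ *: _]/(h^-1 * 0) mulr0.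
      + by rewrite h0 eqxx in hn0.
    apply: cvg_trans; first exact: (near_eq_cvg E).
    have C : (fun h : R => Num.max 0 h) @ (0:R) --> (0:R).
      have C0 : {for (0:R), continuous ((cst 0 : R -> R^o) \max (id : R -> R^o))}.
        by apply: continuous_max; [exact: cvg_cst | exact: cvg_id].
      rewrite -[X in _ --> X](maxxx (0:R)); exact: C0.
    exact: cvg_within_filter C.
  apply: DeriveDef; first by apply/cvg_ex; exists 0.
  rewrite mulr0; exact: cvg_lim.
Unshelve. all: by end_near. Qed.

Lemma Fq_comp_derive n (f : 'rV[R]_n -> R) x v : differentiable f x ->
  is_derive x v (fun y => Fq (f y)) (2 * Num.max 0 (f x) * 'D_v f x).
Proof.
move=> df.
have dF : differentiable Fq (f x).
  by apply/derivable1_diffP; exact: (@ex_derive _ _ _ _ _ _ _ (Fq_is_derive (f x))).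
have dc : differentiable (Fq \o f) x by exact: differentiable_comp.
apply: DeriveDef; first exact: diff_derivable.
have -> : 'D_v (fun y => Fq (f y)) x = 'D_v (Fq \o f) x by [].
rewrite (deriveE v dc) diff_comp //= deriv1E; last first.
  exact: (@ex_derive _ _ _ _ _ _ _ (Fq_is_derive (f x))).
rewrite derive1E (@derive_val _ _ _ _ _ _ _ (Fq_is_derive (f x))) -(deriveE v df).
exact: mulrC.
Qed.

Lemma is_derive_bigsum n (I : Type) (r : seq I) (P : pred I)
  (f : I -> 'rV[R]_n -> R) (df : I -> R) x v :
  (forall i, P i -> is_derive x v (f i) (df i)) ->
  is_derive x v (fun y => \sum_(i <- r | P i) f i y) (\sum_(i <- r | P i) df i).
Proof.
move=> H; elim: r => [|a r IH].
  rewrite big_nil.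
  have -> : (fun y => \sum_(i <- [::] | P i) f i y) = cst 0.
    by apply: funext => y; rewrite big_nil.
  exact: is_derive_cst.
rewrite big_cons.
have -> : (fun y => \sum_(i <- (a :: r) | P i) f i y)
   = (fun y => if P a then f a y + \sum_(i <- r | P i) f i y else \sum_(i <- r | P i) f i y).
  by apply: funext => y; rewrite big_cons.
case: (boolP (P a)) => Pa //.
exact: is_deriveD (H a Pa) IH.
Qed.


Lemma pd_La (N n m : nat) (bg : 'I_m -> 'I_N) (theta : 'I_N -> 'rV[R]_n -> R)
  (g : 'I_m -> 'rV[R]_n -> R) nu (u : 'I_m -> R) (rho : R) x i :
  0 < rho -> differentiable (theta nu) x -> (forall j, differentiable (g j) x) ->
  pd (La bg theta g nu u rho) x i = pd (theta nu) x i
    + \sum_(j < m | bg j == nu) pd (g j) x i * Num.max 0 (u j + rho * g j x).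
Proof.
move=> rho0 dth dg.
set v := unitv R i.
have Hj : forall j, is_derive x v (fun y => Fq (g j y + u j / rho))
    (2 * Num.max 0 (g j x + u j / rho) * 'D_v (g j) x).
  move=> j.
  have dfj : differentiable (g j + cst (u j / rho)) x.
    by apply: differentiableD => //; exact: differentiable_cst.
  have := @Fq_comp_derive _ (g j + cst (u j / rho)) x v dfj.
  have Dj : is_derive x v (g j + cst (u j / rho)) ('D_v (g j) x + 0).
    apply: (is_deriveD _ (is_derive_cst (u j / rho) x v)).
    exact/derivableP/diff_derivable.
  by rewrite (@derive_val _ _ _ _ _ _ _ Dj) addr0.
have HS := @is_derive_bigsum n _ (index_enum 'I_m) (fun j => bg j == nu) (fun j y => Fq (g j y + u j / rho)) _ x v (fun j _ => Hj j).
have HZ := is_deriveZ (rho / 2) HS.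
have Hth : is_derive x v (theta nu) ('D_v (theta nu) x).
  exact/derivableP/diff_derivable.
have HL := is_deriveD Hth HZ.
rewrite /pd -/v.
have -> : La bg theta g nu u rho = theta nu + (rho / 2) \*: (fun y => \sum_(j <- index_enum 'I_m | bg j == nu) Fq (g j y + u j / rho)) by [].
rewrite (@derive_val _ _ _ _ _ _ _ HL).
congr (_ + _).
rewrite -[LHS]/((rho / 2) * _) big_distrr /=; apply: eq_bigr => j _.
have -> : u j + rho * g j x = rho * (g j x + u j / rho).
  by rewrite mulrDr mulrCA mulfV ?gt_eqF // mulr1 addrC.
rewrite -[X in _ = _ * Num.max X _](mulr0 rho) -maxr_pMr ?ltW //.
by field.
Qed.


Lemma min_bound (a l : R) : 0 <= l -> - `|a| <= Num.min (- a) l <= `|a|.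
Proof.
move=> l0; case: (leP (- a) l) => h; case: (leP 0 a) => ha.
- rewrite ger0_norm //; apply/andP; split; lra.
- rewrite ltr0_norm //; apply/andP; split; lra.
- rewrite ger0_norm //; apply/andP; split; lra.
- rewrite ltr0_norm //; apply/andP; split; lra.
Qed.

Lemma bnorm_cvg0 k0 (P : pred 'I_k0) (v : nat -> 'I_k0 -> R) :
  (forall j, P j -> (fun k => v k j) @ \oo --> (0:R)) ->
  (fun k => bnorm P (v k)) @ \oo --> (0:R).
Proof.
move=> H.
have H2 : forall j, P j -> (fun k => v k j ^+ 2) @ \oo --> (0:R).
  move=> j Pj.
  suff E : (fun k => v k j ^+ 2) = ((fun k => v k j) \* (fun k => v k j)).
    by rewrite E -(mulr0 (0:R)); apply: cvgM; exact: H.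
  by apply: funext => k; rewrite /= expr2.
have S := @cvg_big R 'I_k0 +%R 0 P add_continuous nat \oo (index_enum _)
  (fun j k => v k j ^+ 2) (fun _ => 0) eventually_filter H2.
rewrite big1_eq in S.
have := cvg_comp _ _ S (@sqrt_continuous R 0).
by rewrite sqrtr0.
Qed.

End S.

Theorem lemma4p5 (R : realType) (N n m p : nat)
  (bx : 'I_n -> 'I_N) (bg : 'I_m -> 'I_N) (bh : 'I_p -> 'I_N)
  (theta : 'I_N -> 'rV[R]_n -> R) (g : 'I_m -> 'rV[R]_n -> R) (h : 'I_p -> 'rV[R]_n -> R)
  (Htheta : forall nu, C1 (theta nu)) (Hg : forall j, C1 (g j)) (Hh : forall l, C1 (h l))
  (tau gam : 'I_N -> R) (umax : 'I_m -> R)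
  (x : nat -> 'rV[R]_n) (lam u : nat -> 'I_m -> R) (mu : nat -> 'I_p -> R)
  (rho : 'I_N -> nat -> R) (eps eps' : nat -> R)
  (Htau : forall nu, 0 < tau nu < 1) (Hgam : forall nu, 1 < gam nu)
  (Hrho0 : forall nu, 0 < rho nu 0%N) (Humax : forall j, 0 <= umax j)
  (* inexactness assumption, with eps_k decreasing to 0 and eps'_k -> 0 *)
  (Heps0 : forall k, 0 <= eps k) (Hepsdec : forall k, eps k.+1 <= eps k)
  (Heps : eps @ \oo --> 0) (Heps'0 : forall k, 0 <= eps' k) (Heps' : eps' @ \oo --> 0)
  (Hinex1 : forall k nu,
     bnorm (fun i => bx i == nu)
       (fun i => pd (La bg theta g nu (u k) (rho nu k)) (x k.+1) i
                 + \sum_(l < p | bh l == nu) pd (h l) (x k.+1) i * mu k.+1 l)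
     <= eps k)
  (Hinex2 : forall k nu,
     bnorm (fun l => bh l == nu) (fun l => Num.min (- h l (x k.+1)) (mu k.+1 l)) <= eps' k)
  (* step (2) *)
  (Hlam : forall k j, lam k.+1 j = Num.max 0 (u k j + rho (bg j) k * g j (x k.+1)))
  (* step (3) *)
  (Hrho : forall k nu, rho nu k.+1 =
     if bnorm (fun j => bg j == nu) (fun j => Num.min (- g j (x k.+1)) (lam k.+1 j))
        <= tau nu * bnorm (fun j => bg j == nu) (fun j => Num.min (- g j (x k)) (lam k j))
     then rho nu k else gam nu * rho nu k)
  (* step (4) *)
  (Hu : forall k j, u k.+1 j = Num.min (lam k.+1 j) (umax j))
  (* limit point along a subsequence K = range phi *)
  (phi : nat -> nat) (Hphi : forall a b, (a < b)%N -> (phi a < phi b)%N)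
  (xbar : 'rV[R]_n) (Hconv : (fun k => x (phi k)) @ \oo --> xbar)
  (* feasibility of xbar *)
  (Hfeas_g : forall j, g j xbar <= 0) (Hfeas_h : forall l, h l xbar <= 0) :
  forall nu : 'I_N,
    (fun k => bnorm (fun i => bx i == nu)
       (fun i => pd (theta nu) (x (phi k)) i
                 + \sum_(j < m | bg j == nu) pd (g j) (x (phi k)) i * lam (phi k) j
                 + \sum_(l < p | bh l == nu) pd (h l) (x (phi k)) i * mu (phi k) l))
      @ \oo --> 0
    /\ (fun k => bnorm (fun j => bg j == nu)
          (fun j => Num.min (- g j (x (phi k))) (lam (phi k) j))) @ \oo --> 0
    /\ (fun k => bnorm (fun l => bh l == nu)
          (fun l => Num.min (- h l (x (phi k))) (mu (phi k) l))) @ \oo --> 0.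
Proof.
move=> nu.
have rho_pos : forall nu k, 0 < rho nu k.
  move=> nu'; elim=> [|k IH]; first exact: Hrho0.
  rewrite Hrho; case: ifP => _ //.
  by apply: mulr_gt0 => //; apply: lt_trans (Hgam nu'); exact: ltr01.
have rho_mono1 : forall nu k, rho nu k <= rho nu k.+1.
  move=> nu' k; rewrite Hrho; case: ifP => _ //.
  have := rho_pos nu' k; have := Hgam nu'; nra.
have rho_mono : forall nu k k', (k <= k')%N -> rho nu k <= rho nu k'.
  move=> nu' k k' /subnKC <-; elim: (k' - k)%N => [|d IH]; first by rewrite addn0.
  by apply: le_trans IH _; rewrite addnS; exact: rho_mono1.
have phi_ge : forall k, (k <= phi k)%N.
  elim=> [|k IH]; first exact: leq0n.
  exact: leq_ltn_trans IH (Hphi _ _ (ltnSn k)).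
have phi_oo : phi @ \oo --> \oo.
  apply/cvgnyPge => A; near=> k; apply: leq_trans (phi_ge k).
  by near: k; exact: nbhs_infty_ge.
have phim1_oo : (fun k => (phi k).-1) @ \oo --> \oo.
  apply/cvgnyPge => A; near=> k.
  have : (A.+1 <= k)%N by near: k; exact: nbhs_infty_ge.
  have := phi_ge k; lia.
have phiS : \forall k \near \oo, exists K, phi k = K.+1.
  near=> k; exists (phi k).-1; rewrite prednK //.
  apply: leq_trans (phi_ge k); near: k; exact: nbhs_infty_ge.
have sub0 : forall a : nat -> R, a @ \oo --> 0 -> (fun k => a (phi k).-1) @ \oo --> 0.
  move=> a Ha; exact: (cvg_comp _ _ phim1_oo Ha).
have dth : forall y, differentiable (theta nu) y := (Htheta nu).1.
have dg : forall j y, differentiable (g j) y := fun j => (Hg j).1.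
split.
  apply: (@squeeze_cvgr _ _ _ _ (cst 0) (fun k => eps (phi k).-1)); last 2 first.
  - exact: cvg_cst.
  - exact: sub0.
  near=> k.
  have [K HK] : exists K, phi k = K.+1 by near: k; exact: phiS.
  rewrite HK /=; apply/andP; split; first exact: sqrtr_ge0.
  apply: le_trans (Hinex1 K nu); rewrite le_eqVlt; apply/orP; left; apply/eqP.
  congr (bnorm _ _); apply: funext => i.
  rewrite (@pd_La R _ _ _ bg theta g nu (u K) (rho nu K) (x K.+1) i (rho_pos nu K) (dth _) (fun j => dg j _)).
  congr (_ + _ + _).
  by apply: eq_bigr => j /eqP Hj; rewrite Hlam Hj.
split; last first.
  apply: (@squeeze_cvgr _ _ _ _ (cst 0) (fun k => eps' (phi k).-1)); last 2 first.
  - exact: cvg_cst.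
  - exact: sub0.
  near=> k.
  have [K HK] : exists K, phi k = K.+1 by near: k; exact: phiS.
  rewrite HK /=; apply/andP; split; first exact: sqrtr_ge0.
  exact: Hinex2.
set b := fun k => bnorm (fun j => bg j == nu) (fun j => Num.min (- g j (x k)) (lam k j)).
have phi_cvg : forall a : nat -> R, a @ \oo --> 0 -> (fun k => a (phi k)) @ \oo --> 0.
  move=> a Ha; exact: (cvg_comp _ _ phi_oo Ha).
have [[K0 HK0]|NK] := pselect (exists K0, forall k, (K0 <= k)%N -> b k.+1 <= tau nu * b k).
  have tau0 : 0 <= tau nu by have /andP[/ltW] := Htau nu.
  have geo : forall d, b (K0 + d)%N <= tau nu ^+ d * b K0.
    elim=> [|d IH]; first by rewrite addn0 expr0 mul1r.
    rewrite addnS exprS -mulrA; apply: le_trans (HK0 _ (leq_addr _ _)) _.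
    exact: ler_wpM2l.
  have Hb : b @ \oo --> 0.
    apply: (@squeeze_cvgr _ _ _ _ (cst 0) (fun k => tau nu ^+ (k - K0) * b K0)); last 2 first.
    - exact: cvg_cst.
    - rewrite -(mul0r (b K0)); apply: cvgM; last exact: cvg_cst.
      apply: (cvg_comp _ _ (cvg_subnr K0)); apply: cvg_expr.
      by rewrite ger0_norm //; have /andP[] := Htau nu.
    near=> k; apply/andP; split; first exact: sqrtr_ge0.
    have Kk : (K0 <= k)%N by near: k; exact: nbhs_infty_ge.
    by rewrite -{1}(subnKC Kk); exact: geo.
  exact: (cvg_comp _ _ phi_oo Hb).
have NK' : forall K0, exists k, (K0 <= k)%N /\ ~~ (b k.+1 <= tau nu * b k).
  move=> K0; apply: contrapT => H; apply: NK; exists K0 => k Hk.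
  apply: contrapT => Hn; apply: H; exists k; split => //; exact/negP.
have grow : forall t : nat, exists K, forall k, (K <= k)%N ->
    rho nu 0%N + t%:R * ((gam nu - 1) * rho nu 0%N) <= rho nu k.
  elim=> [|t [K HK]].
    by exists 0%N => k _; rewrite mul0r addr0; exact: rho_mono.
  have [k [Kk Hn]] := NK' K.
  exists k.+1 => k' Hk'; apply: le_trans (rho_mono _ _ _ Hk').
  have e : rho nu k.+1 = gam nu * rho nu k by rewrite Hrho (negbTE Hn).
  rewrite e -addn1 natrD.
  have := HK k Kk; have := rho_mono nu 0%N k (leq0n k); have := Hgam nu; have := rho_pos nu 0%N.
  nra.
have rho_inf : forall M, \forall k \near \oo, M <= rho nu k.
  move=> M.
  have c0 : 0 < (gam nu - 1) * rho nu 0%N.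
    by apply: mulr_gt0; [rewrite subr_gt0; exact: Hgam | exact: rho_pos].
  have [t _ Ht] := nbhs_infty_ger (M / ((gam nu - 1) * rho nu 0%N)).
  have {}Ht := Ht t (leqnn t).
  have [K HK] := grow t.
  exists K => // k /= Kk; apply: le_trans (HK k Kk).
  rewrite ler_pdivrMr // in Ht.
  apply: le_trans Ht _; rewrite lerDr; exact: ltW (rho_pos nu 0%N).
apply: bnorm_cvg0 => j /eqP Hj.
have Cg : (fun k => g j (x (phi k))) @ \oo --> g j xbar.
  exact: (cvg_comp _ _ Hconv (differentiable_continuous (dg j xbar))).
have lam0 : \forall k \near \oo, 0 <= lam (phi k) j.
  near=> k; have [K HK] : exists K, phi k = K.+1 by near: k; exact: phiS.
  by rewrite HK Hlam le_max lexx.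
have [gneg|gz] : g j xbar < 0 \/ g j xbar = 0.
  by move: (Hfeas_g j); rewrite le_eqVlt => /orP[/eqP ->|->]; [right|left].
  set U := Num.max (umax j) (u 0%N j).
  have ub : forall k, u k j <= U.
    case=> [|k]; first by rewrite le_max lexx orbT.
    by rewrite Hu ge_min; apply/orP; right; rewrite le_max lexx.
  set c := - g j xbar / 2.
  have c0 : 0 < c by rewrite /c; lra.
  set M := (U + 1) / c.
  have Mc : M * c = U + 1 by rewrite /M divfK // gt_eqF.
  have F1 : \forall k \near \oo, g j (x (phi k)) < - c.
    by apply: (cvgr_lt (g j xbar)) => //; rewrite /c; lra.
  have F2 : \forall k \near \oo, M <= rho nu (phi k).-1.
    exact: (phim1_oo _ (rho_inf M)).
  apply: (@squeeze_cvgr _ _ _ _ (cst 0) (cst 0)); last 2 first.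
  - exact: cvg_cst.
  - exact: cvg_cst.
  near=> k.
  have [K HK] : exists K, phi k = K.+1 by near: k; exact: phiS.
  have f1 : g j (x (phi k)) < - c by near: k; exact: F1.
  have f2 : M <= rho nu (phi k).-1 by near: k; exact: F2.
  rewrite HK /= in f1 f2 *.
  have lz : lam K.+1 j = 0.
    rewrite Hlam Hj; apply/max_idPl.
    have := ub K; have := rho_pos nu K; nra.
  rewrite lz; have -> : Num.min (- g j (x K.+1)) 0 = 0 by apply/min_idPr; lra.
  by rewrite lexx.
apply: (@squeeze_cvgr _ _ _ _ (fun k => - `|g j (x (phi k))|) (fun k => `|g j (x (phi k))|)).
- near=> k; apply: min_bound; near: k; exact: lam0.
- have := cvgN (cvg_norm Cg); rewrite gz normr0 oppr0; exact.
- have := cvg_norm Cg; rewrite gz normr0; exact.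
Unshelve. all: by end_near.
Qed.
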